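(* Let $\mathcal{T}$ be a stiffly-connected, edge-simple 3-dimensional truss with stiffness matrix $\mathbf{M}$, let $\mathbf{q}$ be a vector orthogonal to the null space of $\mathbf{M}$, let $s$ be an oriented triangle, and let $i,j$ be a pair of vertices within tetrahedron-distance $h$ of $s$. Then $(\bar{\mathbf{q}}^{\langle s\rangle})^\top\mathbf{M}\,\bar{\mathbf{q}}^{\langle s\rangle}\ge 2^{-\Theta(h)}\|\bar{\mathbf{q}}^{\langle s\rangle}_i-\bar{\mathbf{q}}^{\langle s\rangle}_j\|_2^2$.
   Context: A 3-dimensional truss has $n$ vertices at distinct points $\mathbf{p}_i\in\mathbb{R}^3$, a set of tetrahedra (four vertices each), edges all pairs of vertices sharing a tetrahedron, and positive stiffness coefficients $\gamma(e)$; its stiffness matrix is $\mathbf{M}=\sum_{e=(i,j)}\frac{\gamma(e)}{\|\mathbf{p}_i-\mathbf{p}_j\|_2}\mathbf{b}^{(e)}\mathbf{b}^{(e)\top}$ where $\mathbf{b}^{(e)}\in\mathbb{R}^{3n}$ has block $i$ equal to $(\mathbf{p}_i-\mathbf{p}_j)/\|\mathbf{p}_i-\mathbf{p}_j\|_2$, block $j$ its negative, zeros elsewhere. Edge-simple: tetrahedra form a simplicial complex, each has constant-bounded aspect ratio, and edge lengths and stiffness coefficients are bounded above and below by positive constants. Stiffly-connected: the graph on tetrahedra with adjacency = sharing a triangle face is connected, and for each vertex its restriction to the tetrahedra containing that vertex is connected. For $\mathbf{v}\in\mathbb{R}^{3n}$, $\mathbf{v}_i\in\mathbb{R}^3$ is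 its $i$-th block. Fix an index $c$ and define $\mathbf{p}^{\perp xy}_i=[-(\mathbf{p}_i-\mathbf{p}_c)_y,(\mathbf{p}_i-\mathbf{p}_c)_x,0]^\top$, $\mathbf{p}^{\perp xz}_i=[-(\mathbf{p}_i-\mathbf{p}_c)_z,0,(\mathbf{p}_i-\mathbf{p}_c)_x]^\top$, $\mathbf{p}^{\perp yz}_i=[0,-(\mathbf{p}_i-\mathbf{p}_c)_z,(\mathbf{p}_i-\mathbf{p}_c)_y]^\top$. For an oriented triangle $s=\langle s_1,s_2,s_3\rangle$ (ordered triple of vertices of a triangle face), the centering $\bar{\mathbf{q}}^{\langle s\rangle}$ of $\mathbf{q}$ is the vector $\mathbf{q}+\sum_{d_1d_2\in\{xy,xz,yz\}}c^{\langle s\rangle\perp d_1d_2}\mathbf{p}^{\perp d_1d_2}$ (real scalars $c$) such that the plane through $\bar{\mathbf{q}}^{\langle s\rangle}_{s_1},\bar{\mathbf{q}}^{\langle s\rangle}_{s_2},\bar{\mathbf{q}}^{\langle s\rangle}_{s_3}$ is parallel to the plane through $\mathbf{p}_{s_1},\mathbf{p}_{s_2},\mathbf{p}_{s_3}$ and $\bar{\mathbf{q}}^{\langle s\rangle}_{s_1}-\bar{\mathbf{q}}^{\langle s\rangle}_{s_2}$ is parallel to $\mathbf{p}_{s_1}-\mathbf{p}_{s_2}$. The tetrahedron-distance between objects $x$ and $y$ of the complex is the smallest $d$ for which there is a sequence of tetrahedra $t^{(0)},\dots,t^{(d)}$ with $x\subseteq t^{(0)}$, $y\subseteq t^{(d)}$,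 and consecutive tetrahedra sharing a triangle face. The constant in $\Theta(h)$ depends only on the constant bounds above. *)

(* Defs.v *)
From HB Require Import structures.
From mathcomp Require Import all_boot all_order all_algebra.
From mathcomp Require Import reals.
Set Implicit Arguments. Unset Strict Implicit. Unset Printing Implicit Defensive.
Import Order.TTheory GRing.Theory Num.Theory.
Local Open Scope ring_scope.

Section Truss.
Variable R : realType.

Definition comp (v : 'rV[R]_3) (k : nat) : R := v 0 (inord k).
Definition dot3 (u v : 'rV[R]_3) : R := \sum_(k < 3) u 0 k * v 0 k.
Definition norm3 (v : 'rV[R]_3) : R := Num.sqrt (dot3 v v).
Definition vec3 (x y z : R) : 'rV[R]_3 :=
  \row_(k < 3) (if val k == 0%N then x else if val k == 1%N then y else z).
Definition cross3 (u v : 'rV[R]_3) : 'rV[R]_3 :=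
  vec3 (comp u 1 * comp v 2 - comp u 2 * comp v 1)
       (comp u 2 * comp v 0 - comp u 0 * comp v 2)
       (comp u 0 * comp v 1 - comp u 1 * comp v 0).
Definition det3 (u v w : 'rV[R]_3) : R := dot3 u (cross3 v w).

Variable n : nat.
Implicit Types (p : 'I_n -> 'rV[R]_3) (T : {set {set 'I_n}}).

Definition dist p (i j : 'I_n) : R := norm3 (p i - p j).

Definition is_edge T (a b : 'I_n) : bool :=
  (a != b) && [exists t in T, (a \in t) && (b \in t)].

Definition tadj (t t' : {set 'I_n}) : bool := #|t :&: t'| == 3%N.

Definition tchain T (P : {set 'I_n} -> Prop) (d : nat) (f : nat -> {set 'I_n}) :=
  (forall k, (k <= d)%N -> f k \in T /\ P (f k)) /\
  (forall k, (k < d)%N -> tadj (f k) (f k.+1)).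

Definition tdist_le T (x y : {set 'I_n}) (h : nat) : Prop :=
  exists d f, (d <= h)%N /\ tchain T (fun _ => True) d f /\
              x \subset f 0%N /\ y \subset f d.

Definition tri_area p (a b c : 'I_n) : R :=
  norm3 (cross3 (p b - p a) (p c - p a)) / 2.
Definition tet_volume p (a b c d : 'I_n) : R :=
  `|det3 (p b - p a) (p c - p a) (p d - p a)| / 6.
Definition tet_surface p (a b c d : 'I_n) : R :=
  tri_area p a b c + tri_area p a b d + tri_area p a c d + tri_area p b c d.
Definition tet_inradius p (a b c d : 'I_n) : R :=
  3 * tet_volume p a b c d / tet_surface p a b c d.
Definition tet_maxedge p (a b c d : 'I_n) : R :=
  Num.max (Num.max (Num.max (dist p a b) (dist p a c)) (Num.max (dist p a d) (dist p b c)))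
          (Num.max (dist p b d) (dist p c d)).
Definition tet_aspect p (a b c d : 'I_n) : R :=
  tet_maxedge p a b c d / tet_inradius p a b c d.

Definition in_hull p (S : {set 'I_n}) (x : 'rV[R]_3) : Prop :=
  exists w : 'I_n -> R, (forall k, 0 <= w k) /\ (forall k, k \notin S -> w k = 0) /\
    \sum_k w k = 1 /\ x = \sum_k w k *: p k.

Definition simplicial_complex p T : Prop :=
  (forall t, t \in T -> #|t| = 4%N) /\
  (forall t t', t \in T -> t' \in T -> forall x,
      in_hull p t x /\ in_hull p t' x <-> in_hull p (t :&: t') x).

Definition edge_simple (K Lmin Lmax gmin gmax : R) p T (gam : 'I_n -> 'I_n -> R) : Prop :=
  simplicial_complex p T /\
  (forall t a b c d, t \in T -> t = [set a; b; c; d] ->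
      0 < tet_volume p a b c d /\ tet_aspect p a b c d <= K) /\
  (forall a b, is_edge T a b -> Lmin <= dist p a b <= Lmax) /\
  (forall a b, is_edge T a b -> gmin <= gam a b <= gmax).

Definition stiffly_connected T : Prop :=
  (forall t t', t \in T -> t' \in T ->
     exists d f, tchain T (fun _ => True) d f /\ f 0%N = t /\ f d = t') /\
  (forall v : 'I_n, forall t t', t \in T -> t' \in T -> v \in t -> v \in t' ->
     exists d f, tchain T (fun u => v \in u) d f /\ f 0%N = t /\ f d = t').

(* vectors of R^{3n} are represented blockwise as 'I_n -> 'rV_3 *)
Definition bvec p (a b : 'I_n) (i : 'I_n) : 'rV[R]_3 :=
  let u := (dist p a b)^-1 *: (p a - p b) in
  if i == a then u else if i == b then - u else 0.

(* block (i,j) of M = sum_e gamma(e)/len(e) * b^(e) b^(e)^T ; each undirected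
   edge {a,b} counted once via a < b *)
Definition Mblk p T (gam : 'I_n -> 'I_n -> R) (i j : 'I_n) : 'M[R]_3 :=
  \sum_(a : 'I_n) \sum_(b : 'I_n | (a < b)%N)
     (if is_edge T a b then
        (gam a b / dist p a b) *: ((bvec p a b i)^T *m bvec p a b j)
      else 0).

(* (M v)_i written as a row vector *)
Definition applyM p T gam (v : 'I_n -> 'rV[R]_3) (i : 'I_n) : 'rV[R]_3 :=
  \sum_j v j *m (Mblk p T gam i j)^T.

Definition qform p T gam (v : 'I_n -> 'rV[R]_3) : R :=
  \sum_i \sum_j (v i *m Mblk p T gam i j *m (v j)^T) 0 0.

Definition inner (u v : 'I_n -> 'rV[R]_3) : R := \sum_i dot3 (u i) (v i).

Definition orth_nullspace p T gam (q : 'I_n -> 'rV[R]_3) : Prop :=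
  forall v, (forall i, applyM p T gam v i = 0) -> inner q v = 0.

Definition perp_xy p (c i : 'I_n) : 'rV[R]_3 :=
  let d := p i - p c in vec3 (- comp d 1) (comp d 0) 0.
Definition perp_xz p (c i : 'I_n) : 'rV[R]_3 :=
  let d := p i - p c in vec3 (- comp d 2) 0 (comp d 0).
Definition perp_yz p (c i : 'I_n) : 'rV[R]_3 :=
  let d := p i - p c in vec3 0 (- comp d 2) (comp d 1).

Definition shifted p (c : 'I_n) (q : 'I_n -> 'rV[R]_3) (cxy cxz cyz : R) (i : 'I_n) :=
  q i + cxy *: perp_xy p c i + cxz *: perp_xz p c i + cyz *: perp_yz p c i.

(* oriented triangle: ordered triple of vertices of a triangle face *)
Definition oriented_triangle T (s1 s2 s3 : 'I_n) : Prop :=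
  [/\ s1 != s2, s1 != s3, s2 != s3 &
      exists2 t, t \in T & [set s1; s2; s3] \subset t].

(* qb is a centering of q w.r.t. <s1,s2,s3>: the plane through qb_s1,qb_s2,qb_s3
   is parallel to the plane through p_s1,p_s2,p_s3, and qb_s1 - qb_s2 is
   parallel to p_s1 - p_s2 *)
Definition centering_cond p (s1 s2 s3 : 'I_n) (qb : 'I_n -> 'rV[R]_3) : Prop :=
  let nrm := cross3 (p s2 - p s1) (p s3 - p s1) in
  [/\ dot3 (qb s2 - qb s1) nrm = 0, dot3 (qb s3 - qb s1) nrm = 0 &
      cross3 (qb s1 - qb s2) (p s1 - p s2) = 0].

End Truss.

(* Main.v *)
Require Import Defs.
From HB Require Import structures.
From mathcomp Require Import all_boot all_order all_algebra.
From mathcomp Require Import reals.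
From mathcomp Require Import ring lra.
Set Implicit Arguments. Unset Strict Implicit.
Import Order.TTheory GRing.Theory Num.Theory.

Section F.
Variable n : nat.
Lemma card3_ex (A : {set 'I_n}) : #|A| = 3 -> exists a b c, A = [set a; b; c].
Proof.
move=> A3; have : (0 < #|A|)%N by rewrite A3.
case/card_gt0P => a aA.
have : #|A :\ a| == 2 by move: A3; rewrite (cardsD1 a A) aA add1n; case=> ->.
case/cards2P => b [c [_ E]].
exists a, b, c; rewrite -(setD1K aA) E; apply/setP => x; rewrite !inE. by rewrite orbA.
Qed.

Lemma card4_distinct (a b c d : 'I_n) : #|[set a; b; c; d]| = 4 ->
  [/\ a != b, a != c, a != d & [/\ b != c, b != d & c != d]].
Proof.
have E : [set a; b; c; d] = d |: (c |: (b |: [set a])).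
  apply/setP => x; rewrite !inE.
  by case: (x == a); case: (x == b); case: (x == c); case: (x == d).
rewrite E !cardsU1 cards1 !inE (eq_sym a b) (eq_sym a c) (eq_sym a d) (eq_sym b c)
  (eq_sym b d) (eq_sym c d).
by case: (d == c); case: (d == b); case: (d == a); case: (c == b); case: (c == a);
  case: (b == a).
Qed.

Lemma ext4 (t S : {set 'I_n}) (a b c : 'I_n) : #|t| = 4 -> S \subset t -> S = [set a; b; c] ->
  #|S| = 3 -> exists d, t = [set a; b; c; d].
Proof.
move=> t4 St SE S3.
have : #|t :\: S| == 1.
  by rewrite cardsD (setIidPr St) t4 S3.
case/cards1P => d dE.
exists d; apply/setP => x; rewrite !inE.
case xS: (x \in S).
  move: (xS); rewrite SE !inE => ->; by rewrite (subsetP St).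
have : (x \in t :\: S) = (x == d) by rewrite dE inE.
rewrite inE xS /= => ->.
by rewrite SE !inE in xS; rewrite xS.
Qed.

Lemma card3_distinct (a b c : 'I_n) : a != b -> a != c -> b != c -> #|[set a; b; c]| = 3.
Proof.
move=> ab ac bc.
have E : [set a; b; c] = c |: (b |: [set a]).
  apply/setP => x; rewrite !inE.
  by case: (x == a); case: (x == b); case: (x == c).
by rewrite E !cardsU1 cards1 !inE (eq_sym c b) (eq_sym c a) (eq_sym b a)
  (negbTE ab) (negbTE ac) (negbTE bc).
Qed.
End F.

Local Open Scope ring_scope.

Notation cp := Defs.comp.
Section Vec.
Variable R : realType.
Implicit Types u v w : 'rV[R]_3.

Lemma comp_vec3 (x y z : R) :
  [/\ cp (vec3 x y z) 0%N = x, cp (vec3 x y z) 1%N = y & cp (vec3 x y z) 2%N = z].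
Proof. by rewrite /Defs.comp /vec3 !mxE /= !inordK. Qed.

Lemma mk3 u : u = vec3 (cp u 0%N) (cp u 1%N) (cp u 2%N).
Proof.
apply/rowP => k; rewrite /vec3 /cp mxE.
case: k => [[|[|[|//]]] Hk] /=; congr (u 0 _); apply: val_inj; by rewrite /= inordK.
Qed.

Lemma vec3_add (a b c x y z : R) : vec3 a b c + vec3 x y z = vec3 (a + x) (b + y) (c + z).
Proof. apply/rowP => k; rewrite /vec3 !mxE; by case: ifP => _ //; case: ifP. Qed.
Lemma vec3_opp (a b c : R) : - vec3 a b c = vec3 (- a) (- b) (- c).
Proof. apply/rowP => k; rewrite /vec3 !mxE; by case: ifP => _ //; case: ifP. Qed.
Lemma vec3_scale (s a b c : R) : s *: vec3 a b c = vec3 (s * a) (s * b) (s * c).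
Proof. apply/rowP => k; rewrite /vec3 !mxE; by case: ifP => _ //; case: ifP. Qed.
Lemma vec3_0 : (0 : 'rV[R]_3) = vec3 0 0 0.
Proof. apply/rowP => k; rewrite /vec3 !mxE; by case: ifP => _ //; case: ifP. Qed.

Lemma vec3_eq (a b c x y z : R) : vec3 a b c = vec3 x y z -> [/\ a = x, b = y & c = z].
Proof.
move=> E; have [A1 B1 C1] := comp_vec3 a b c; have [A2 B2 C2] := comp_vec3 x y z.
by rewrite E A2 B2 C2 in A1 B1 C1; split.
Qed.

Lemma dot3_vec3 (a b c x y z : R) : dot3 (vec3 a b c) (vec3 x y z) = a * x + b * y + c * z.
Proof. by rewrite /dot3 !big_ord_recr big_ord0 /= !mxE /= add0r. Qed.

Lemma cross3_vec3 (a b c x y z : R) :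
  cross3 (vec3 a b c) (vec3 x y z) = vec3 (b * z - c * y) (c * x - a * z) (a * y - b * x).
Proof.
have [A1 B1 C1] := comp_vec3 a b c; have [A2 B2 C2] := comp_vec3 x y z.
by rewrite /cross3 A1 B1 C1 A2 B2 C2.
Qed.


Lemma vec3_sub (a b c x y z : R) : vec3 a b c - vec3 x y z = vec3 (a - x) (b - y) (c - z).
Proof. by rewrite vec3_opp vec3_add. Qed.

Definition vsimp := (vec3_sub, vec3_add, vec3_opp, vec3_scale, dot3_vec3, cross3_vec3).

Ltac v3 u := rewrite (mk3 u); set (cp u 0%N); set (cp u 1%N); set (cp u 2%N).

Lemma dot3_ge0 u : 0 <= dot3 u u.
Proof. rewrite (mk3 u) dot3_vec3; set a := cp u _; set b := cp u _; set c := cp u _. 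
by rewrite -!expr2 !addr_ge0 ?sqr_ge0. Qed.

Lemma norm3_ge0 u : 0 <= norm3 u.
Proof. exact: sqrtr_ge0. Qed.

Lemma norm3_sq u : norm3 u ^+ 2 = dot3 u u.
Proof. by rewrite /norm3 sqr_sqrtr // dot3_ge0. Qed.

Lemma dot3C u v : dot3 u v = dot3 v u.
Proof. by rewrite /dot3; apply: eq_bigr => k _; rewrite mulrC. Qed.

Lemma lagrange3 u v : dot3 u u * dot3 v v = dot3 u v ^+ 2 + dot3 (cross3 u v) (cross3 u v).
Proof. rewrite (mk3 u) (mk3 v) !vsimp; ring. Qed.

Lemma sqrt_le_from (a b : R) : 0 <= b -> a ^+ 2 <= b ^+ 2 -> `|a| <= b.
Proof.
move=> b0 h; rewrite -sqrtr_sqr -(ger0_norm b0) -sqrtr_sqr ler_sqrt //.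
exact: sqr_ge0.
Qed.

Lemma CS u v : `|dot3 u v| <= norm3 u * norm3 v.
Proof.
apply: sqrt_le_from; first by rewrite mulr_ge0 ?norm3_ge0.
rewrite exprMn !norm3_sq lagrange3 lerDl; exact: dot3_ge0.
Qed.

Lemma cross_le u v : norm3 (cross3 u v) <= norm3 u * norm3 v.
Proof.
apply: le_trans (ler_norm _) _.
apply: sqrt_le_from; first by rewrite mulr_ge0 ?norm3_ge0.
rewrite exprMn !norm3_sq lagrange3 lerDr; exact: sqr_ge0.
Qed.

Lemma dot3D u v w : dot3 u (v + w) = dot3 u v + dot3 u w.
Proof. rewrite (mk3 u) (mk3 v) (mk3 w) !vsimp; ring. Qed.
Lemma dot3N u v : dot3 u (- v) = - dot3 u v.
Proof. rewrite (mk3 u) (mk3 v) !vsimp; ring. Qed.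
Lemma dot3Z u v s : dot3 u (s *: v) = s * dot3 u v.
Proof. rewrite (mk3 u) (mk3 v) !vsimp; ring. Qed.

Lemma tri_le u v : norm3 (u + v) <= norm3 u + norm3 v.
Proof.
rewrite -(ger0_norm (norm3_ge0 (u + v))).
apply: sqrt_le_from; first by rewrite addr_ge0 ?norm3_ge0.
rewrite norm3_sq sqrrD !norm3_sq dot3D dot3C dot3D (dot3C (u+v) v) dot3D (dot3C v u) mulr2n.
have := CS u v; have := ler_norm (dot3 u v); lra.
Qed.

Lemma norm3Z s u : norm3 (s *: u) = `|s| * norm3 u.
Proof.
rewrite /norm3 dot3Z dot3C dot3Z mulrA -expr2 sqrtrM ?sqr_ge0 // sqrtr_sqr //.
Qed.

Lemma norm3N u : norm3 (- u) = norm3 u.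
Proof. by rewrite -scaleN1r norm3Z normrN normr1 mul1r. Qed.

Lemma norm3B u v : norm3 (u - v) = norm3 (v - u).
Proof. by rewrite -norm3N opprB. Qed.

Lemma tri_leB u v w : norm3 (u - w) <= norm3 (u - v) + norm3 (v - w).
Proof. have := tri_le (u - v) (v - w). by rewrite addrA subrK. Qed.

End Vec.

Section Q.
Variable R : realType.
Variable n : nat.
Variables (p : 'I_n -> 'rV[R]_3) (T : {set {set 'I_n}}) (gam : 'I_n -> 'I_n -> R).

Definition xterm (v : 'I_n -> 'rV[R]_3) a b : R :=
  \sum_i dot3 (v i) (bvec p a b i).

Lemma mx11_mul (u : 'rV[R]_3) (w : 'rV[R]_3) (b c : 'rV[R]_3) :
  (u *m (b^T *m c) *m w^T) 0 0 = dot3 u b * dot3 c w.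
Proof.
rewrite !mulmxA -(mulmxA (u *m b^T)) mxE big_ord1 /dot3 !mxE.
congr (_ * _); apply: eq_bigr => k _; by rewrite !mxE.
Qed.

Lemma term_expand v a b :
  (if is_edge T a b then gam a b / dist p a b * xterm v a b ^+ 2 else 0) =
  \sum_(i : 'I_n) \sum_(j : 'I_n) (if is_edge T a b then gam a b / dist p a b *
        (dot3 (v i) (bvec p a b i) * dot3 (v j) (bvec p a b j)) else 0).
Proof.
case: ifP => _; last by rewrite big1 // => i _; rewrite big1.
rewrite expr2 /xterm big_distrlr mulr_sumr; apply: eq_bigr => i _.
by rewrite mulr_sumr.
Qed.

Lemma qform_expand v :
  qform p T gam v = \sum_(a : 'I_n) \sum_(b : 'I_n | (a < b)%N)
     (if is_edge T a b then gam a b / dist p a b * xterm v a b ^+ 2 else 0).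
Proof.
rewrite /qform.
transitivity (\sum_i \sum_j \sum_(a : 'I_n) \sum_(b : 'I_n | (a < b)%N)
     (if is_edge T a b then gam a b / dist p a b *
        (dot3 (v i) (bvec p a b i) * dot3 (v j) (bvec p a b j)) else 0)).
  apply: eq_bigr => i _; apply: eq_bigr => j _.
  rewrite /Mblk mulmx_sumr mulmx_suml summxE; apply: eq_bigr => a _.
  rewrite mulmx_sumr mulmx_suml summxE; apply: eq_bigr => b _.
  case: ifP => _; last by rewrite mulmx0 mul0mx mxE.
  rewrite -scalemxAr -scalemxAl mxE mx11_mul //; congr (_ * (_ * _)).
  exact: dot3C.
symmetry.
under eq_bigr => a _ do under eq_bigr => b _ do rewrite term_expand.
under eq_bigr => a _ do rewrite exchange_big /=.
under eq_bigr => a _ do under eq_bigr => i _ do rewrite exchange_big /=.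
rewrite exchange_big /=; apply: eq_bigr => i _.
by rewrite exchange_big.
Qed.

Definition strain (v : 'I_n -> 'rV[R]_3) a b := dot3 (p a - p b) (v a - v b).

Lemma strainC v a b : strain v a b = strain v b a.
Proof. by rewrite /strain -opprB dot3C -(opprB (v b)) dot3N dot3C dot3N opprK. Qed.

Lemma xterm_val v a b : a != b -> xterm v a b = (dist p a b)^-1 * strain v a b.
Proof.
move=> ab; rewrite /xterm (bigD1 a) //= (bigD1 b) 1?eq_sym //= big1; last first.
  move=> i /andP[ib ia]; rewrite /bvec (negbTE ia) (negbTE ib).
  by rewrite vec3_0 (mk3 (v i)) dot3_vec3; ring.
have ba : (b == a) = false by rewrite eq_sym (negbTE ab).
rewrite /bvec eqxx ba.
rewrite eqxx addr0 dot3N dot3Z dot3Z -mulrBr /strain; congr (_ * _).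
by rewrite [RHS]dot3D dot3N !(dot3C (p a - p b)).
Qed.

Lemma qform_ge v a b :
  (forall a b, is_edge T a b -> 0 < gam a b /\ 0 < dist p a b) ->
  is_edge T a b -> (a < b)%N ->
  gam a b / dist p a b * xterm v a b ^+ 2 <= qform p T gam v.
Proof.
move=> pos eab ltab.
have tnn : forall a b, 0 <= (if is_edge T a b then gam a b / dist p a b * xterm v a b ^+ 2 else 0).
  move=> x y; case: ifP => // /pos [g d]; by rewrite mulr_ge0 ?sqr_ge0 // divr_ge0 // ltW.
rewrite qform_expand (bigD1 a) //= (bigD1 b) //= eab -addrA lerDl.
by rewrite addr_ge0 // sumr_ge0 // => i _; rewrite sumr_ge0.
Qed.

Lemma is_edgeC a b : is_edge T a b = is_edge T b a.
Proof.
rewrite /is_edge eq_sym; congr (_ && _).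
by apply/existsP/existsP => [[t /and3P[tT h1 h2]]|[t /and3P[tT h1 h2]]]; exists t; rewrite tT h1 h2.
Qed.

Lemma strain_le (K l L gmin gmax : R) v a b : 0 < l -> 0 < gmin ->
  edge_simple K l L gmin gmax p T gam -> is_edge T a b ->
  gmin / L ^+ 3 * strain v a b ^+ 2 <= qform p T gam v.
Proof.
move=> l0 g0 [_ [_ [Hd Hg]]].
have pos : forall a b, is_edge T a b -> 0 < gam a b /\ 0 < dist p a b.
  move=> x y exy; have /andP[h1 _] := Hg _ _ exy; have /andP[h2 _] := Hd _ _ exy.
  split; [exact: lt_le_trans h1 | exact: lt_le_trans h2].
wlog ab : a b / (a < b)%N.
  move=> H eab; case: (ltngtP a b) => h; first exact: H.
    by rewrite strainC; apply: H => //; rewrite is_edgeC.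
  by move: eab; rewrite /is_edge (val_inj h) eqxx.
move=> eab.
have := qform_ge v pos eab ab.
have anb : a != b by rewrite neq_ltn ab.
rewrite xterm_val //; apply: le_trans.
have /andP[gl gu] := Hg _ _ eab; have /andP[dl du] := Hd _ _ eab.
have [gp dp] := pos _ _ eab.
have -> : gam a b / dist p a b * ((dist p a b)^-1 * strain v a b) ^+ 2 =
   gam a b / dist p a b ^+ 3 * strain v a b ^+ 2.
  by field; rewrite gt_eqF.
apply: ler_wpM2r; first exact: sqr_ge0.
apply: ler_pM => //; first exact: ltW.
  by rewrite invr_ge0 exprn_ge0 // (le_trans (ltW l0)) // (le_trans dl).
rewrite lef_pV2 ?posrE ?exprn_gt0 //; last by apply: lt_le_trans du.
by apply: lerXn2r => //; rewrite nnegrE ltW //; apply: lt_le_trans du.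
Qed.
End Q.

Section G.
Variable R : realType.
Implicit Types u v w x : 'rV[R]_3.

Lemma vec3_congr (a b c x y z : R) : a = x -> b = y -> c = z -> vec3 a b c = vec3 x y z.
Proof. by move=> -> -> ->. Qed.

Lemma solve_id x r1 r2 r3 :
  det3 r1 r2 r3 *: x = dot3 x r1 *: cross3 r2 r3 + dot3 x r2 *: cross3 r3 r1
                       + dot3 x r3 *: cross3 r1 r2.
Proof. rewrite /det3 (mk3 x) (mk3 r1) (mk3 r2) (mk3 r3) !vsimp; apply: vec3_congr; ring. Qed.

Lemma solve3 x r1 r2 r3 :
  `|det3 r1 r2 r3| * norm3 x <= `|dot3 x r1| * (norm3 r2 * norm3 r3)
     + `|dot3 x r2| * (norm3 r3 * norm3 r1) + `|dot3 x r3| * (norm3 r1 * norm3 r2).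
Proof.
rewrite -norm3Z solve_id.
apply: le_trans (tri_le _ _) _; apply: lerD; first apply: le_trans (tri_le _ _) _; 
  first apply: lerD.
all: rewrite norm3Z; apply: ler_wpM2l => //; exact: cross_le.
Qed.

Lemma det_shift (a b c d : 'rV[R]_3) : det3 (d - a) (d - b) (d - c) = det3 (b - a) (c - a) (d - a).
Proof. rewrite /det3 (mk3 a) (mk3 b) (mk3 c) (mk3 d) !vsimp; ring. Qed.

Lemma triple u v w : det3 u v w = dot3 (cross3 u v) w.
Proof. rewrite /det3 (mk3 u) (mk3 v) (mk3 w) !vsimp; ring. Qed.

Lemma det_sq u v w : det3 u v w ^+ 2 = dot3 (cross3 u v) (cross3 (cross3 v w) (cross3 w u)).
Proof. rewrite /det3 (mk3 u) (mk3 v) (mk3 w) !vsimp; ring. Qed.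

Lemma cross_anti u v : cross3 v u = - cross3 u v.
Proof. rewrite (mk3 u) (mk3 v) !vsimp; apply: vec3_congr; ring. Qed.

Lemma detN u v : det3 (cross3 u v) v u = - dot3 (cross3 u v) (cross3 u v).
Proof. by rewrite /det3 (cross_anti u v) dot3N. Qed.

Lemma real_tet (l M D s1 s2 s3 s4 K : R) :
  0 < l -> l <= M -> 0 < D -> 0 <= s1 -> 0 <= s2 -> 0 <= s3 -> 0 <= s4 ->
  D ^+ 2 <= s1 * s2 * s3 ->
  M / (3 * (D / 6) / (s1 / 2 + s2 / 2 + s3 / 2 + s4 / 2)) <= K ->
  0 < K /\ l ^+ 3 <= K ^+ 3 * D.
Proof.
move=> l0 lM D0 h1 h2 h3 h4 Dsq asp.
set S := s1 / 2 + s2 / 2 + s3 / 2 + s4 / 2 in asp.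
have S0 : 0 < S.
  rewrite lt_def; apply/andP; split; last by rewrite /S; lra.
  apply/eqP => S0.
  have [e1 e2 e3] : [/\ s1 = 0, s2 = 0 & s3 = 0] by split; rewrite /S in S0; lra.
  by move: Dsq; rewrite e1 !mul0r; nra.
have r : 3 * (D / 6) / S = D / (2 * S).
  by field; rewrite (gt_eqF S0).
rewrite r in asp.
have rp : 0 < D / (2 * S) by rewrite divr_gt0 // mulr_gt0.
have MK : M <= K * (D / (2 * S)) by rewrite -ler_pdivrMr.
have SMK : 2 * S * M <= K * D.
  have -> : K * D = K * (D / (2 * S)) * (2 * S) by field; rewrite (gt_eqF S0).
  by rewrite mulrC ler_pM2r // mulr_gt0.
have K0 : 0 < K by nra.
split => //.
have s8 : D ^+ 2 <= 8 * S ^+ 3.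
  apply: le_trans Dsq _.
  have a1 : s1 <= 2 * S by rewrite /S; lra.
  have a2 : s2 <= 2 * S by rewrite /S; lra.
  have a3 : s3 <= 2 * S by rewrite /S; lra.
  have : s1 * s2 <= 2 * S * (2 * S) by apply: ler_pM.
  move=> h; have : s1 * s2 * s3 <= 2 * S * (2 * S) * (2 * S) by apply: ler_pM => //; rewrite mulr_ge0.
  move=> h'; apply: le_trans h' _; rewrite le_eqVlt; apply/orP; left; apply/eqP; ring.
have A : 2 * S * l <= K * D by nra.
have B : (2 * S * l) ^+ 2 <= K ^+ 2 * D ^+ 2.
  rewrite -exprMn !expr2; apply: ler_pM => //; nra.
have C : l ^+ 2 <= 2 * K ^+ 2 * S.
  have E1 : 4 * S ^+ 2 * l ^+ 2 = (2 * S * l) ^+ 2 by ring.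
  have E2 : 4 * S ^+ 2 * (2 * K ^+ 2 * S) = K ^+ 2 * (8 * S ^+ 3) by ring.
  have : 4 * S ^+ 2 * l ^+ 2 <= 4 * S ^+ 2 * (2 * K ^+ 2 * S).
    rewrite E1 E2; apply: le_trans B _; apply: ler_wpM2l => //; exact: sqr_ge0.
  rewrite ler_pM2l //; rewrite mulr_gt0 // exprn_gt0 //.
have h : l ^+ 3 <= 2 * K ^+ 2 * S * l by rewrite exprSr ler_pM2r.
apply: le_trans h _.
have E3 : 2 * K ^+ 2 * S * l = K ^+ 2 * (2 * S * l) by ring.
have E4 : K ^+ 3 * D = K ^+ 2 * (K * D) by ring.
rewrite E3 E4; apply: ler_wpM2l => //; exact: sqr_ge0.
Qed.


Lemma dot3_0 u : dot3 u 0 = 0.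
Proof. by rewrite vec3_0 (mk3 u) !vsimp; ring. Qed.

Lemma dotNN u v : dot3 (- u) (- v) = dot3 u v.
Proof. by rewrite dot3N dot3C dot3N dot3C opprK. Qed.

Lemma step_bound (pa pb pc pd va vb vc vd : 'rV[R]_3) (L D0 dl B : R) :
  0 < D0 -> D0 <= `|det3 (pb - pa) (pc - pa) (pd - pa)| ->
  norm3 (pd - pa) <= L -> norm3 (pd - pb) <= L -> norm3 (pd - pc) <= L ->
  `|dot3 (pd - pa) (vd - va)| <= dl -> `|dot3 (pd - pb) (vd - vb)| <= dl ->
  `|dot3 (pd - pc) (vd - vc)| <= dl ->
  norm3 (vb - va) <= B -> norm3 (vc - va) <= B ->
  norm3 (vd - va) <= 3 * L ^+ 2 * (dl + L * B) / D0.
Proof.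
move=> D0p D0le h1 h2 h3 e1 e2 e3 b1 b2.
have L0 : 0 <= L by apply: le_trans h1; exact: norm3_ge0.
have B0 : 0 <= B by apply: le_trans b1; exact: norm3_ge0.
have dl0 : 0 <= dl by apply: le_trans e1.
set x := vd - va.
have key : forall (pz vz : 'rV[R]_3), norm3 (pd - pz) <= L -> `|dot3 (pd - pz) (vd - vz)| <= dl ->
   norm3 (vz - va) <= B -> `|dot3 x (pd - pz)| <= dl + L * B.
  move=> pz vz hz ez bz.
  have -> : x = (vd - vz) + (vz - va) by rewrite /x addrA subrK.
  rewrite dot3C dot3D; apply: le_trans (ler_normD _ _) _; apply: lerD => //.
  apply: le_trans (CS _ _) _; apply: ler_pM => //; exact: norm3_ge0.
have k1 : `|dot3 x (pd - pa)| <= dl + L * B.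
  rewrite dot3C; apply: le_trans e1 _; rewrite lerDl; exact: mulr_ge0.
have k2 := key _ _ h2 e2 b1.
have k3 := key _ _ h3 e3 b2.
have S := solve3 x (pd - pa) (pd - pb) (pd - pc).
rewrite det_shift in S.
rewrite ler_pdivlMr // mulrC.
apply: le_trans (ler_wpM2r (norm3_ge0 x) D0le) _.
apply: le_trans S _.
have LL : forall (y z : 'rV[R]_3), norm3 y <= L -> norm3 z <= L -> norm3 y * norm3 z <= L ^+ 2.
  move=> y z hy hz; rewrite expr2; apply: ler_pM => //; exact: norm3_ge0.
have T1 : forall (a : R) y z, `|a| <= dl + L * B -> norm3 y <= L -> norm3 z <= L ->
   `|a| * (norm3 y * norm3 z) <= (dl + L * B) * L ^+ 2.
  move=> a y z ha hy hz; apply: ler_pM => //; last exact: LL.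
  by rewrite mulr_ge0 ?norm3_ge0.
have := T1 _ _ _ k1 h2 h3; have := T1 _ _ _ k2 h3 h1; have := T1 _ _ _ k3 h1 h2.
lra.
Qed.

Lemma base_bound (p1 p2 p3 p4 v1 v2 v3 : 'rV[R]_3) (l L D0 dl : R) :
  0 < l -> 0 < D0 -> D0 <= `|det3 (p2 - p1) (p3 - p1) (p4 - p1)| ->
  l <= norm3 (p2 - p1) -> norm3 (p2 - p1) <= L -> norm3 (p3 - p1) <= L ->
  norm3 (p4 - p1) <= L ->
  dot3 (v3 - v1) (cross3 (p2 - p1) (p3 - p1)) = 0 ->
  cross3 (v1 - v2) (p1 - p2) = 0 ->
  `|dot3 (p2 - p1) (v2 - v1)| <= dl -> `|dot3 (p3 - p1) (v3 - v1)| <= dl ->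
  `|dot3 (p3 - p2) (v3 - v2)| <= dl ->
  (norm3 (v2 - v1) <= dl / l) /\ (norm3 (v3 - v1) <= L ^+ 2 * (4 * dl + L * (dl / l)) / D0).
Proof.
move=> l0 D0p D0le hl h2 h3 h4 cN cr e12 e13 e23.
have L0 : 0 <= L by apply: le_trans h2; exact: norm3_ge0.
have dl0 : 0 <= dl by apply: le_trans e12.
have d2 : norm3 (v2 - v1) <= dl / l.
  have lag := lagrange3 (v1 - v2) (p1 - p2).
  rewrite cr dot3_0 addr0 -!norm3_sq -exprMn in lag.
  have E : norm3 (v1 - v2) * norm3 (p1 - p2) = `|dot3 (p2 - p1) (v2 - v1)|.
    rewrite -(ger0_norm (mulr_ge0 (norm3_ge0 _) (norm3_ge0 _))) -sqrtr_sqr lag sqrtr_sqr.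
    by rewrite -(opprB v2) -(opprB p2) dotNN dot3C.
  rewrite norm3B ler_pdivlMr // mulrC.
  apply: le_trans (ler_wpM2r (norm3_ge0 _) hl) _.
  by rewrite mulrC (norm3B p2) E.
split => //.
set N := cross3 (p2 - p1) (p3 - p1).
set x := v3 - v1.
have N0 : 0 <= norm3 N := norm3_ge0 _.
have DN : D0 <= norm3 N * L.
  apply: le_trans D0le _; rewrite triple; apply: le_trans (CS _ _) _.
  by apply: ler_wpM2l.
have b3 : `|dot3 x (p2 - p1)| <= 3 * dl + L * (dl / l).
  have -> : dot3 x (p2 - p1) = dot3 (p3 - p1) (v3 - v1) - dot3 (p3 - p2) (v3 - v2)
      - dot3 (p3 - p1) (v2 - v1) + dot3 (p2 - p1) (v2 - v1).
    by rewrite /x (mk3 p1) (mk3 p2) (mk3 p3) (mk3 v1) (mk3 v2) (mk3 v3) !vsimp; ring.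
  have c : `|dot3 (p3 - p1) (v2 - v1)| <= L * (dl / l).
    apply: le_trans (CS _ _) _; apply: ler_pM => //; exact: norm3_ge0.
  set a1 := dot3 _ _ in e13 *; set a2 := dot3 _ _ in e23 *; set a3 := dot3 _ _ in c *.
  set a4 := dot3 _ _ in e12 *.
  have := ler_normD (a1 - a2 - a3) a4; have := ler_normD (a1 - a2) (- a3);
  have := ler_normD a1 (- a2); rewrite !normrN; lra.
have S := solve3 x N (p3 - p1) (p2 - p1).
have cN' : dot3 x N = 0 by exact: cN.
rewrite detN cN' normr0 mul0r add0r normrN ger0_norm ?dot3_ge0 // -norm3_sq in S.
have b2 : `|dot3 x (p3 - p1)| <= dl by rewrite dot3C.
have S' : norm3 N * (norm3 N * norm3 x) <= norm3 N * (L * (4 * dl + L * (dl / l))).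
  rewrite mulrA -expr2; apply: le_trans S _.
  have q1 : `|dot3 x (p3 - p1)| * (norm3 (p2 - p1) * norm3 N) <= dl * (L * norm3 N).
    apply: ler_pM => //; first by rewrite mulr_ge0 ?norm3_ge0.
    by apply: ler_wpM2r.
  have q2 : `|dot3 x (p2 - p1)| * (norm3 N * norm3 (p3 - p1)) <= (3 * dl + L * (dl / l)) * (norm3 N * L).
    apply: ler_pM => //; first by rewrite mulr_ge0 ?norm3_ge0.
    by apply: ler_wpM2l.
  apply: le_trans (lerD q1 q2) _; rewrite le_eqVlt; apply/orP; left; apply/eqP; ring.
have Npos : 0 < norm3 N.
  rewrite lt_def N0 andbT; apply/eqP => N00; move: DN; rewrite N00 mul0r; lra.
rewrite ler_pM2l // in S'.
rewrite ler_pdivlMr // mulrC; apply: le_trans (ler_wpM2r (norm3_ge0 x) DN) _.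
have -> : norm3 N * L * norm3 x = L * (norm3 N * norm3 x) by ring.
apply: le_trans (ler_wpM2l L0 S') _.
rewrite le_eqVlt; apply/orP; left; apply/eqP; ring.
Qed.
End G.

Section M.
Variable R : realType.
Variable n : nat.
Implicit Types (p : 'I_n -> 'rV[R]_3) (T : {set {set 'I_n}}).

Lemma tet_D p (a b c d : 'I_n) (K l : R) : 0 < l -> 0 < tet_volume p a b c d ->
  tet_aspect p a b c d <= K -> l <= dist p a b ->
  0 < K /\ l ^+ 3 <= K ^+ 3 * `|det3 (p b - p a) (p c - p a) (p d - p a)|.
Proof.
rewrite /tet_aspect /tet_inradius /tet_volume /tet_surface /tri_area.
move=> l0 V0 asp lab.
have D0 : 0 < `|det3 (p b - p a) (p c - p a) (p d - p a)| by move: V0; lra.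
apply: (real_tet l0 _ D0 _ _ _ _ _ asp); rewrite ?norm3_ge0 //.
  by rewrite /tet_maxedge !le_max lab.
set u := p b - p a; set v := p c - p a; set w := p d - p a.
rewrite real_normK ?num_real // det_sq.
apply: le_trans (ler_norm _) _; apply: le_trans (CS _ _) _.
rewrite -mulrA; apply: ler_wpM2l; first exact: norm3_ge0.
apply: le_trans (cross_le _ _) _.
by rewrite mulrC (cross_anti u w) norm3N.
Qed.

End M.

Section Main.
Variable R : realType.
Variables (n : nat) (p : 'I_n -> 'rV[R]_3) (T : {set {set 'I_n}}) (gam : 'I_n -> 'I_n -> R).
Variables (K l L gmin gmax : R).
Variable v : 'I_n -> 'rV[R]_3.
Hypothesis l0 : 0 < l.
Hypothesis g0 : 0 < gmin.
Hypothesis ES : edge_simple K l L gmin gmax p T gam.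
Hypothesis K0 : 0 < K.
Hypothesis lL : l <= L.

Local Notation E := (qform p T gam v).
Local Notation kap := (gmin / L ^+ 3).
Local Notation dl := (Num.sqrt (E / kap)).
Local Notation D0 := (l ^+ 3 / K ^+ 3).
Local Notation aa := (3 * L ^+ 2 / D0).
Local Notation b2 := (l^-1).
Local Notation b3 := (L ^+ 2 * (4 + L * l^-1) / D0).
Local Notation b4 := (aa * (1 + L * (b2 + b3))).
Local Notation A := (1 + aa + 2 * L * aa + b2 + b3 + b4).

Lemma L_pos : 0 < L. Proof. exact: lt_le_trans lL. Qed.
Lemma D0_pos : 0 < D0. Proof. by rewrite divr_gt0 ?exprn_gt0. Qed.
Lemma kap_pos : 0 < kap. Proof. by rewrite divr_gt0 ?exprn_gt0 ?L_pos. Qed.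
Lemma aa_ge0 : 0 <= aa.
Proof.
apply: divr_ge0; last exact: ltW D0_pos.
by apply: mulr_ge0 => //; apply: exprn_ge0; exact: ltW L_pos.
Qed.
Lemma b2_ge0 : 0 <= b2. Proof. by rewrite invr_ge0 ltW. Qed.
Lemma b3_ge0 : 0 <= b3.
Proof.
have L0 := ltW L_pos; have l0' := ltW l0.
apply: divr_ge0; last exact: ltW D0_pos.
apply: mulr_ge0; first exact: exprn_ge0.
by apply: addr_ge0 => //; apply: mulr_ge0; rewrite ?invr_ge0.
Qed.
Lemma b4_ge0 : 0 <= b4.
Proof.
apply: mulr_ge0; first exact: aa_ge0.
apply: addr_ge0 => //; apply: mulr_ge0; first exact: ltW L_pos.
by apply: addr_ge0; [exact: b2_ge0 | exact: b3_ge0].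
Qed.
Lemma Laa_ge0 : 0 <= L * aa. Proof. by apply: mulr_ge0; [exact: ltW L_pos | exact: aa_ge0]. Qed.
Lemma A_ge1 : 1 <= A.
Proof. have := aa_ge0; have := b2_ge0; have := b3_ge0; have := b4_ge0; have := Laa_ge0; lra. Qed.

Lemma edge_in t x y : t \in T -> x \in t -> y \in t -> x != y -> is_edge T x y.
Proof. by move=> tT xt yt xy; rewrite /is_edge xy; apply/existsP; exists t; rewrite tT xt yt. Qed.

Lemma dist_le x y : is_edge T x y -> norm3 (p x - p y) <= L.
Proof. by case: ES => _ [_ [Hd _]] /Hd /andP[]. Qed.
Lemma dist_ge x y : is_edge T x y -> l <= norm3 (p x - p y).
Proof. by case: ES => _ [_ [Hd _]] /Hd /andP[]. Qed.

Lemma strain_dl x y : is_edge T x y -> `|dot3 (p x - p y) (v x - v y)| <= dl.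
Proof.
move=> exy; have h := strain_le v l0 g0 ES exy.
have s2 : strain p v x y ^+ 2 <= E / kap by rewrite ler_pdivlMr ?kap_pos // mulrC.
apply: sqrt_le_from; first exact: sqrtr_ge0.
rewrite sqr_sqrtr //; apply: le_trans s2; exact: sqr_ge0.
Qed.

Lemma dl_ge0 : 0 <= dl. Proof. exact: sqrtr_ge0. Qed.

Lemma tet_card t : t \in T -> #|t| = 4.
Proof. by case: ES => [[H _] _] /H. Qed.

Lemma tet_det4 a b c d : [set a; b; c; d] \in T ->
  D0 <= `|det3 (p b - p a) (p c - p a) (p d - p a)|.
Proof.
move=> tT.
have [ab _ _ _] := card4_distinct (tet_card tT).
case: ES => _ [Hv _].
have [V0 asp] := Hv _ a b c d tT erefl.
have lab : l <= dist p a b by apply: dist_ge; apply: (edge_in tT); rewrite ?inE ?eqxx ?orbT.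
have [_ h] := tet_D l0 V0 asp lab.
by rewrite ler_pdivrMr ?exprn_gt0 // mulrC.
Qed.

Lemma inS4 (a b c d x : 'I_n) : x \in [set a; b; c; d] -> [\/ x = a, x = b, x = c | x = d].
Proof.
rewrite !inE; case/orP; first case/orP; first case/orP.
all: move/eqP=> ->; by [constructor 1 | constructor 2 | constructor 3 | constructor 4].
Qed.

Lemma in4 (a b c d : 'I_n) : [/\ a \in [set a; b; c; d], b \in [set a; b; c; d],
   c \in [set a; b; c; d] & d \in [set a; b; c; d]].
Proof. by rewrite !inE !eqxx !orbT. Qed.

Lemma eq_sym_neq (x y : 'I_n) : x != y -> y != x.
Proof. by rewrite eq_sym. Qed.

Lemma base_case s1 s2 s3 t :
  oriented_triangle T s1 s2 s3 -> centering_cond p s1 s2 s3 v -> t \in T ->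
  [set s1; s2; s3] \subset t -> forall x, x \in t -> norm3 (v x - v s1) <= A * dl.
Proof.
move=> [n12 n13 n23 _] [c1 c2 c3] tT sub.
have [d4 tE] := ext4 (tet_card tT) sub erefl (card3_distinct n12 n13 n23).
have tT' := tT; rewrite tE in tT'.
have [i1 i2 i3 i4] := in4 s1 s2 s3 d4.
have ed : forall x y, x \in [set s1; s2; s3; d4] -> y \in [set s1; s2; s3; d4] -> x != y ->
   is_edge T x y by move=> x y hx hy; exact: (edge_in tT' hx hy).
have [_ _ n14 [_ n24 n34]] := card4_distinct (tet_card tT').
have D0le := tet_det4 tT'.
have e21 : is_edge T _ _ := ed _ _ i2 i1 (eq_sym_neq n12).
have e31 : is_edge T _ _ := ed _ _ i3 i1 (eq_sym_neq n13).
have e32 : is_edge T _ _ := ed _ _ i3 i2 (eq_sym_neq n23).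
have e41 : is_edge T _ _ := ed _ _ i4 i1 (eq_sym_neq n14).
have e42 : is_edge T _ _ := ed _ _ i4 i2 (eq_sym_neq n24).
have e43 : is_edge T _ _ := ed _ _ i4 i3 (eq_sym_neq n34).
have [h2 h3] := base_bound l0 D0_pos D0le (dist_ge e21) (dist_le e21) (dist_le e31)
   (dist_le e41) c2 c3 (strain_dl e21) (strain_dl e31) (strain_dl e32).
have dl0 := dl_ge0.
have h2' : norm3 (v s2 - v s1) <= (b2 + b3) * dl.
  apply: le_trans h2 _; rewrite mulrC ler_wpM2r //.
  by rewrite lerDl b3_ge0.
have h3' : norm3 (v s3 - v s1) <= (b2 + b3) * dl.
  apply: le_trans h3 _.
  have -> : L ^+ 2 * (4 * dl + L * (dl / l)) / D0 = b3 * dl by rewrite mulrA; ring.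
  by rewrite ler_wpM2r // lerDr b2_ge0.
have h4 := step_bound D0_pos D0le (dist_le e41) (dist_le e42) (dist_le e43)
   (strain_dl e41) (strain_dl e42) (strain_dl e43) h2' h3'.
have E4 : 3 * L ^+ 2 * (dl + L * ((b2 + b3) * dl)) / D0 = b4 * dl by ring.
rewrite E4 in h4.
have A0 := A_ge1; have a0 := aa_ge0; have q2 := b2_ge0; have q3 := b3_ge0; have q4 := b4_ge0.
have La := Laa_ge0.
move=> x; rewrite tE => /inS4 [->|->|->|->].
- rewrite subrr /norm3 dot3_0 sqrtr0; apply: mulr_ge0 => //; lra.
- apply: le_trans h2' _; apply: ler_wpM2r => //; lra.
- apply: le_trans h3' _; apply: ler_wpM2r => //; lra.
- apply: le_trans h4 _; apply: ler_wpM2r => //; lra.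
Qed.

Lemma step_case t t' s1 (B : R) : t \in T -> t' \in T -> tadj t t' -> dl <= B ->
  (forall x, x \in t -> norm3 (v x - v s1) <= B) ->
  forall x, x \in t' -> norm3 (v x - v s1) <= A * B.
Proof.
move=> tT tT' adj dlB H.
have c3 := eqP adj.
have [a [b [c SE]]] := card3_ex c3.
have [d4 tE] := ext4 (tet_card tT') (subsetIr t t') SE c3.
have inS : forall y, y \in [set a; b; c] -> y \in t.
  by move=> y; rewrite -SE => /setIP[].
have ha : norm3 (v a - v s1) <= B by apply: H; apply: inS; rewrite !inE eqxx.
have hb : norm3 (v b - v s1) <= B by apply: H; apply: inS; rewrite !inE eqxx orbT.
have hc : norm3 (v c - v s1) <= B by apply: H; apply: inS; rewrite !inE eqxx !orbT.
have tT'' := tT'; rewrite tE in tT''.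
have [i1 i2 i3 i4] := in4 a b c d4.
have [_ _ n14 [_ n24 n34]] := card4_distinct (tet_card tT'').
have ed : forall x y, x \in [set a; b; c; d4] -> y \in [set a; b; c; d4] -> x != y ->
   is_edge T x y by move=> x y hx hy; exact: (edge_in tT'' hx hy).
have e41 : is_edge T _ _ := ed _ _ i4 i1 (eq_sym_neq n14).
have e42 : is_edge T _ _ := ed _ _ i4 i2 (eq_sym_neq n24).
have e43 : is_edge T _ _ := ed _ _ i4 i3 (eq_sym_neq n34).
have D0le := tet_det4 tT''.
have hba : norm3 (v b - v a) <= B + B.
  by apply: le_trans (tri_leB _ (v s1) _) _; rewrite (norm3B (v s1)); apply: lerD.
have hca : norm3 (v c - v a) <= B + B.
  by apply: le_trans (tri_leB _ (v s1) _) _; rewrite (norm3B (v s1)); apply: lerD.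
have h4 := step_bound D0_pos D0le (dist_le e41) (dist_le e42) (dist_le e43)
   (strain_dl e41) (strain_dl e42) (strain_dl e43) hba hca.
have dl0 := dl_ge0.
have A0 := A_ge1; have a0 := aa_ge0; have q2 := b2_ge0; have q3 := b3_ge0; have q4 := b4_ge0.
have B0 : 0 <= B by apply: le_trans dlB.
have AB : B <= A * B by rewrite -{1}(mul1r B) ler_wpM2r.
move=> x; rewrite tE => /inS4 [->|->|->|->].
- exact: le_trans ha AB.
- exact: le_trans hb AB.
- exact: le_trans hc AB.
apply: le_trans (tri_leB _ (v a) _) _.
apply: le_trans (lerD h4 ha) _.
have e : A * B - (3 * L ^+ 2 * (dl + L * (B + B)) / D0 + B) =
   aa * (B - dl) + (b2 + b3 + b4) * B by ring.
rewrite -subr_ge0 e; apply: addr_ge0; apply: mulr_ge0 => //; lra.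
Qed.

Lemma chain_bound s1 s2 s3 d f :
  oriented_triangle T s1 s2 s3 -> centering_cond p s1 s2 s3 v ->
  tchain T (fun _ => True) d f -> [set s1; s2; s3] \subset f 0%N ->
  forall k, (k <= d)%N -> forall x, x \in f k -> norm3 (v x - v s1) <= A ^+ k.+1 * dl.
Proof.
move=> ot cc [fT fadj] sub; elim=> [|k IH] kd x.
  rewrite expr1; apply: base_case ot cc (proj1 (fT 0%N isT)) sub x.
have kd' : (k <= d)%N by apply: ltnW.
rewrite exprS -mulrA.
apply: step_case (proj1 (fT k kd')) (proj1 (fT k.+1 kd)) (fadj k kd) _ (IH kd') x.
rewrite -{1}(mul1r dl) ler_wpM2r ?dl_ge0 //.
exact: exprn_ege1 A_ge1.
Qed.
End Main.

Definition Acst (R : realType) (K l L : R) : R :=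
 (1 + 3 * L ^+ 2 / (l ^+ 3 / K ^+ 3) +
 2 * L * (3 * L ^+ 2 / (l ^+ 3 / K ^+ 3)) + l^-1 +
 L ^+ 2 * (4 + L * l^-1) / (l ^+ 3 / K ^+ 3) +
 3 * L ^+ 2 / (l ^+ 3 / K ^+ 3) *
 (1 + L * (l^-1 + L ^+ 2 * (4 + L * l^-1) / (l ^+ 3 / K ^+ 3)))).

Lemma pow2_bound (R : realType) (Q : R) : exists m : nat, Q <= 2 ^+ m.
Proof.
exists (Num.Def.archi_bound `|Q|).
have h := archi_boundP (normr_ge0 Q).
apply: le_trans (ler_norm Q) _; apply: le_trans (ltW h) _.
rewrite -natrX ler_nat; apply: ltnW; exact: ltn_expl.
Qed.

Unset Implicit Arguments.
Theorem lemma4p4 (R : realType) (K Lmin Lmax gmin gmax : R) :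
  0 < Lmin -> 0 < gmin ->
  exists C : nat,
  forall (n : nat) (p : 'I_n -> 'rV[R]_3) (T : {set {set 'I_n}})
         (gam : 'I_n -> 'I_n -> R),
    injective p ->
    edge_simple K Lmin Lmax gmin gmax p T gam ->
    stiffly_connected T ->
    forall q : 'I_n -> 'rV[R]_3,
    orth_nullspace p T gam q ->
    forall (c s1 s2 s3 : 'I_n),
    oriented_triangle T s1 s2 s3 ->
    forall cxy cxz cyz : R,
    centering_cond p s1 s2 s3 (shifted p c q cxy cxz cyz) ->
    forall (i j : 'I_n) (h : nat),
    tdist_le T [set s1; s2; s3] [set i] h ->
    tdist_le T [set s1; s2; s3] [set j] h ->
    qform p T gam (shifted p c q cxy cxz cyz) >=
      ((2 : R) ^+ (C * h.+1))^-1 *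
      norm3 (shifted p c q cxy cxz cyz i - shifted p c q cxy cxz cyz j) ^+ 2.
Proof.
move=> l0 g0.
set kap := gmin / Lmax ^+ 3.
set A := Acst K Lmin Lmax.
have [m Hm] := pow2_bound ((4 / kap + 1) * A ^+ 2).
exists m => n p T gam _ ES _ q _ c s1 s2 s3 ot cxy cxz cyz cc i j h
  [di [fi [dih [chi [subi0 subi]]]]] [dj [fj [djh [chj [subj0 subj]]]]].
set v := shifted p c q cxy cxz cyz in cc *.
have [n12 n13 n23 [t tT st]] := ot.
have [d4 tE] := ext4 (tet_card ES tT) st erefl (card3_distinct n12 n13 n23).
have tT' := tT; rewrite tE in tT'.
have e12 : is_edge T s1 s2.
  by apply: (edge_in (t := t)) => //; apply: (subsetP st); rewrite !inE eqxx ?orbT.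
have /andP[lab lL] : (Lmin <= dist p s1 s2 <= Lmax) by case: ES => _ [_ [Hd _]]; apply: Hd.
have [K0 _] : 0 < K /\ _ := tet_D l0 (proj1 (proj1 (proj2 ES) _ s1 s2 s3 d4 tT' erefl))
   (proj2 (proj1 (proj2 ES) _ s1 s2 s3 d4 tT' erefl)) lab.
have lL' : Lmin <= Lmax := le_trans lab lL.
set E := qform p T gam v.
set dl := Num.sqrt (E / kap).
have A1 : 1 <= A := A_ge1 l0 K0 lL'.
have kp : 0 < kap := kap_pos l0 g0 lL'.
have E0 : 0 <= E.
  apply: le_trans (strain_le v l0 g0 ES e12).
  by apply: mulr_ge0; [exact: ltW | exact: sqr_ge0].
have dl0 : 0 <= dl := sqrtr_ge0 _.
have iin : i \in fi di by apply: (subsetP subi); rewrite inE.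
have jin : j \in fj dj by apply: (subsetP subj); rewrite inE.
have hi : norm3 (v i - v s1) <= A ^+ di.+1 * dl :=
  chain_bound l0 g0 ES K0 lL' ot cc chi subi0 (leqnn di) iin.
have hj : norm3 (v j - v s1) <= A ^+ dj.+1 * dl :=
  chain_bound l0 g0 ES K0 lL' ot cc chj subj0 (leqnn dj) jin.
set P := A ^+ h.+1.
have P0 : 0 <= P by apply: exprn_ge0; apply: le_trans A1.
have hi' : norm3 (v i - v s1) <= P * dl.
  apply: le_trans hi _; apply: ler_wpM2r => //; exact: ler_weXn2l.
have hj' : norm3 (v j - v s1) <= P * dl.
  apply: le_trans hj _; apply: ler_wpM2r => //; exact: ler_weXn2l.
set N := norm3 (v i - v j).
have N0 : 0 <= N := norm3_ge0 _.
have hN : N <= 2 * (P * dl).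
  apply: le_trans (tri_leB _ (v s1) _) _; rewrite (norm3B (v s1)); lra.
have hN2 : N ^+ 2 <= 4 / kap * P ^+ 2 * E.
  apply: le_trans (lerXn2r 2 _ _ hN) _; rewrite ?nnegrE //.
    by apply: mulr_ge0 => //; apply: mulr_ge0.
  rewrite exprMn exprMn sqr_sqrtr; last by apply: divr_ge0 => //; exact: ltW.
  rewrite le_eqVlt; apply/orP; left; apply/eqP; ring.
set Z := (2 : R) ^+ (m * h.+1).
have Z0 : 0 < Z by apply: exprn_gt0.
rewrite mulrC ler_pdivrMr //.
apply: le_trans hN2 _.
rewrite [E * Z]mulrC; apply: ler_wpM2r => //.
have k0 : 0 <= 4 / kap by apply: divr_ge0 => //; exact: ltW.
have Q0 : 0 <= (4 / kap + 1) * A ^+ 2.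
  by apply: mulr_ge0; [lra | exact: sqr_ge0].
have ZQ : ((4 / kap + 1) * A ^+ 2) ^+ h.+1 <= Z.
  rewrite /Z exprM; apply: lerXn2r => //; rewrite nnegrE //; exact: exprn_ge0.
apply: le_trans ZQ.
rewrite exprMn /P -!exprM mulnC; apply: ler_wpM2r; first by apply: exprn_ge0; lra.
apply: le_trans (ler_eXnr _ _) => //; lra.
Qed.
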